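(* Let $\sigma>0$, $\lambda>0$, $\rho>0$ satisfy $\rho^{-2}\sigma<1$ and $\rho\le\lambda-2\rho^{-1}\sigma(1-\rho^{-2}\sigma)^{-1}$. Define $\sigma_1=\sigma$, $\lambda_1=\lambda$ and $\sigma_{k+1}=\lambda_k^{-2}\sigma_k^2$, $\lambda_{k+1}=\lambda_k-2\lambda_k^{-1}\sigma_k$ for $k\in\mathbb{Z}_{>0}$. Then the sequence $\{(\sigma_k,\lambda_k)\}_{k\ge1}$ is convergent, with $\sigma_k\to0$, $\lambda_k>0$ for all $k\in\mathbb{Z}_{>0}$, and $\lambda_k\downarrow\bar\lambda$ as $k\to\infty$ for some $\bar\lambda\ge\rho$. *)

(* Defs.v *)
From Stdlib Require Import Reals.
Open Scope R_scope.

(* seqSL s l n = (sigma_{n+1}, lambda_{n+1}) : index n = 0 corresponds to k = 1. *)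
Fixpoint seqSL (s l : R) (n : nat) : R * R :=
  match n with
  | O => (s, l)
  | S m => let (sk, lk) := seqSL s l m in
           (/ (lk ^ 2) * sk ^ 2, lk - 2 * / lk * sk)
  end.

Definition sig_seq (s l : R) (n : nat) : R := fst (seqSL s l n).
Definition lam_seq (s l : R) (n : nat) : R := snd (seqSL s l n).

(* Main.v *)
Require Import Defs.
From Stdlib Require Import Reals Lra.
Open Scope R_scope.

Lemma sig_S s l n : sig_seq s l (S n) = / (lam_seq s l n ^ 2) * sig_seq s l n ^ 2.
Proof. unfold sig_seq, lam_seq; simpl; destruct (seqSL s l n); reflexivity. Qed.
Lemma lam_S s l n : lam_seq s l (S n) = lam_seq s l n - 2 * / lam_seq s l n * sig_seq s l n.
Proof. unfold sig_seq, lam_seq; simpl; destruct (seqSL s l n); reflexivity. Qed.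

Theorem lemma4p1 (sigma lambda rho : R)
  (Hs : 0 < sigma) (Hl : 0 < lambda) (Hr : 0 < rho)
  (H1 : / (rho ^ 2) * sigma < 1)
  (H2 : rho <= lambda - 2 * / rho * sigma * / (1 - / (rho ^ 2) * sigma)) :
  Un_cv (sig_seq sigma lambda) 0 /\
  (forall n : nat, 0 < lam_seq sigma lambda n) /\
  (forall n : nat, lam_seq sigma lambda (S n) <= lam_seq sigma lambda n) /\
  exists lbar : R, Un_cv (lam_seq sigma lambda) lbar /\ rho <= lbar.
Proof.
  set (q := / (rho ^ 2) * sigma) in *.
  assert (Hr2 : 0 < rho ^ 2) by (apply pow_lt; lra).
  assert (Hq0 : 0 < q) by (unfold q; apply Rmult_lt_0_compat; [apply Rinv_0_lt_compat|]; lra).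
  assert (Hsq : sigma = q * rho ^ 2) by (unfold q; field; lra).
  set (c := 2 * / rho * sigma) in *.
  assert (Hc : 0 < c) by (unfold c; apply Rmult_lt_0_compat; [|lra];
     apply Rmult_lt_0_compat; [lra| apply Rinv_0_lt_compat; lra]).
  assert (Inv : forall n, 0 < sig_seq sigma lambda n <= sigma * q ^ n /\
     lambda - c * (1 - q ^ n) / (1 - q) <= lam_seq sigma lambda n).
  { induction n as [|n [[Hs0 Hs1] Hl1]].
    - unfold sig_seq, lam_seq; simpl. split; [lra|]. unfold Rdiv. rewrite Rminus_diag, Rmult_0_r, Rmult_0_l. lra.
    - assert (Hqn : 0 < q ^ n) by (apply pow_lt; lra).
      assert (Hqn1 : q ^ n <= 1) by (clear -Hq0 H1; induction n; simpl; [lra|]; rewrite <- (Rmult_1_l 1); apply Rmult_le_compat; try lra; left; apply pow_lt; lra).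
      assert (Hlr : rho <= lam_seq sigma lambda n).
      { assert (c * (1 - q ^ n) / (1 - q) <= c * / (1 - q)).
        { unfold Rdiv. rewrite Rmult_assoc. apply Rmult_le_compat_l; [lra|].
          rewrite <- (Rmult_1_l (/ (1-q))) at 2. apply Rmult_le_compat_r; [|lra].
          left; apply Rinv_0_lt_compat; lra. }
        lra. }
      set (x := sig_seq sigma lambda n) in *. set (y := lam_seq sigma lambda n) in *.
      rewrite sig_S, lam_S. fold x y. split; [split|].
      + apply Rmult_lt_0_compat; [apply Rinv_0_lt_compat|]; apply pow_lt; lra.
      + assert (E: / y ^ 2 * x ^ 2 <= x * (x / rho ^ 2)).
        { assert (rho ^ 2 <= y ^ 2) by (apply pow_incr; lra).
          replace (/ y ^ 2 * x ^ 2) with (x * (x / y ^ 2)) by (field; lra).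
          apply Rmult_le_compat_l; [lra|]. unfold Rdiv. apply Rmult_le_compat_l; [lra|].
          apply Rinv_le_contravar; lra. }
        assert (x / rho ^ 2 <= q).
        { apply (Rmult_le_reg_r (rho ^ 2)); [lra|]. unfold Rdiv. rewrite Rmult_assoc, Rinv_l, Rmult_1_r by lra.
          rewrite <- Hsq. assert (sigma * q ^ n <= sigma) by (rewrite <- (Rmult_1_r sigma) at 2; apply Rmult_le_compat_l; lra). lra. }
        change (q ^ S n) with (q * q ^ n). replace (sigma * (q * q ^ n)) with (sigma * q ^ n * q) by ring. assert (x * (x / rho ^ 2) <= sigma * q ^ n * q) by (apply Rmult_le_compat; try lra; unfold Rdiv; apply Rmult_le_pos; [lra| left; apply Rinv_0_lt_compat; lra]).
        lra.
      + assert (E: 2 * / y * x <= c * q ^ n).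
        { unfold c. replace (2 * / y * x) with (2 * (x / y)) by (field; lra).
          replace (2 * / rho * sigma * q ^ n) with (2 * ((sigma * q ^ n) / rho)) by (field; lra).
          apply Rmult_le_compat_l; [lra|]. unfold Rdiv. apply Rmult_le_compat; try lra.
          left; apply Rinv_0_lt_compat; lra. apply Rinv_le_contravar; lra. }
        assert (c * (1 - q ^ S n) / (1 - q) = c * (1 - q ^ n) / (1 - q) + c * q ^ n) by (simpl; field; lra).
        lra. }
  assert (Hlam : forall n, rho <= lam_seq sigma lambda n).
  { intro n. destruct (Inv n) as [_ H]. assert (0 < q ^ n) by (apply pow_lt; lra).
    assert (c * (1 - q ^ n) / (1 - q) <= c * / (1 - q)).
    { unfold Rdiv. rewrite Rmult_assoc. apply Rmult_le_compat_l; [lra|].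
      rewrite <- (Rmult_1_l (/ (1-q))) at 2. apply Rmult_le_compat_r; [|lra].
      left; apply Rinv_0_lt_compat; lra. }
    lra. }
  assert (Hdec : forall n, lam_seq sigma lambda (S n) <= lam_seq sigma lambda n).
  { intro n. rewrite lam_S. destruct (Inv n) as [[? _] _]. specialize (Hlam n).
    assert (0 <= 2 * / lam_seq sigma lambda n * sig_seq sigma lambda n); [|lra].
    apply Rmult_le_pos; [|lra]. apply Rmult_le_pos; [lra|]. left; apply Rinv_0_lt_compat; lra. }
  split; [|split; [intro n; specialize (Hlam n); lra|split; [exact Hdec|]]].
  - intros eps He. destruct (pow_lt_1_zero q) with (y := eps / sigma) as [N HN].
    { rewrite Rabs_right; lra. }
    { unfold Rdiv; apply Rmult_lt_0_compat; [lra|apply Rinv_0_lt_compat; lra]. }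
    exists N. intros n Hn. specialize (HN n Hn). destruct (Inv n) as [[Ha Hb] _].
    unfold R_dist. rewrite Rminus_0_r, Rabs_right by lra.
    rewrite Rabs_right in HN by (left; apply pow_lt; lra).
    apply (Rmult_lt_compat_l sigma) in HN; [|lra].
    replace (sigma * (eps / sigma)) with eps in HN by (field; lra). lra.
  - destruct (decreasing_cv (lam_seq sigma lambda)) as [l Hl'].
    + exact Hdec.
    + exists (- rho). intros x [i ->]. unfold opp_seq. specialize (Hlam i). lra.
    + exists l. split; [exact Hl'|].
      apply Rle_cv_lim with (Un := fun _ => rho) (Vn := lam_seq sigma lambda); auto.
      intros e He. exists O. intros. unfold R_dist. rewrite Rminus_diag, Rabs_R0. lra.
Qed.
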